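(* Let $c\ge2$, let $F$ be a standard $c$-coloring, and let $X_1\ne X_2\in\mathcal X_F$ with $F[X_1]$ monochromatic of color $c_1$ and $F[X_2]$ monochromatic of color $c_2$. Then: (i) if $X_1\cap X_2=\emptyset$, then $c_1=c_2$ and there is a matching $M\subseteq X_1\ast X_2$ such that all edges of $M$ have color $c_1$ and all edges of $(X_1\ast X_2)\setminus M$ have one common color $c_3\neq c_1$; (ii) if $X_1\cap X_2=\{v\}$, then $c_1=c_2$ and all edges of $(X_1\setminus\{v\})\ast(X_2\setminus\{v\})$ have one common color $c_3\neq c_1$; (iii) $|X_1\cap X_2|\ge2$ is impossible.
   Context: A $c$-coloring $F$ is a map from the $2$-subsets of a finite set $V(F)$ to $[c]$. $F$ is standard if it contains no induced copy of any coloring in $\hat K_{3,1}$ or $\hat K_{3,3}$, where: $\hat K_{3,1}$ is the family of $4$-vertex colorings consisting of a monochromatic triangle of color $a$ plus a vertex joined to it by either (two edges of color $a$ and one of color $b\ne a$), or (three edges of three distinct colors, one being $a$), or (two edges of color $b$ and one of color $d$, with $a,b,d$ distinct); $\hat K_{3,3}$ is the family of $6$-vertex colorings consisting of two disjoint triangles monochromatic in colors $a$ and $b$ with all nine edges between them of color $d$, $a,b,d$ distinct. $\mathcal X_F$ is the set of all inclusion-maximal vertex sets of size at least $\max(c+1,6)$ all of whose pairs have the same color. For disjoint $S_1,S_2$, $S_1\ast S_2=\{\{v_1,v_2\}: v_1\in S_1,v_2\in S_2\}$. *)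

(* Defs.v *)
From mathcomp Require Import all_boot.
Set Implicit Arguments. Unset Strict Implicit. Unset Printing Implicit Defensive.

(* A c-coloring on the finite vertex set T: F : T -> T -> 'I_c, symmetric;
   only values F x y with x != y are meaningful (colors of 2-subsets). *)
Definition coloring_sym (T : finType) (c : nat) (F : T -> T -> 'I_c) : Prop :=
  forall x y, F x y = F y x.

(* induced copy of a member of \hat K_{3,1}:
   triangle x,y,z monochromatic of color a, plus a vertex w *)
Definition has_K31 (T : finType) (c : nat) (F : T -> T -> 'I_c) : Prop :=
  exists (x y z w : T) (a b d : 'I_c),
    [/\ uniq [:: x; y; z; w], F x y = a, F y z = a, F x z = a &
      [\/ [/\ F w x = a, F w y = a, F w z = b & b != a],
          [/\ F w x = a, F w y = b, F w z = d & uniq [:: a; b; d]] |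
          [/\ F w x = b, F w y = b, F w z = d & uniq [:: a; b; d]]]].

Definition has_K33 (T : finType) (c : nat) (F : T -> T -> 'I_c) : Prop :=
  exists (x1 x2 x3 y1 y2 y3 : T) (a b d : 'I_c),
    [/\ uniq [:: x1; x2; x3; y1; y2; y3], uniq [:: a; b; d],
        [/\ F x1 x2 = a, F x2 x3 = a & F x1 x3 = a],
        [/\ F y1 y2 = b, F y2 y3 = b & F y1 y3 = b] &
        forall x y, x \in [:: x1; x2; x3] -> y \in [:: y1; y2; y3] -> F x y = d].

Definition standard (T : finType) (c : nat) (F : T -> T -> 'I_c) : Prop :=
  ~ has_K31 F /\ ~ has_K33 F.

Definition mono_col (T : finType) (c : nat) (F : T -> T -> 'I_c) (S : {set T})
  (col : 'I_c) : Prop :=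
  forall x y, x \in S -> y \in S -> x != y -> F x y = col.

Definition mono (T : finType) (c : nat) (F : T -> T -> 'I_c) (S : {set T}) : Prop :=
  exists col, mono_col F S col.

Definition in_XF (T : finType) (c : nat) (F : T -> T -> 'I_c) (X : {set T}) : Prop :=
  [/\ mono F X, maxn c.+1 6 <= #|X| &
      forall Y : {set T}, X \subset Y -> maxn c.+1 6 <= #|Y| -> mono F Y -> Y = X].

(* M is a matching contained in X1 * X2 (edges stored as pairs (u,v), u in X1, v in X2) *)
Definition matching_between (T : finType) (X1 X2 : {set T}) (M : {set T * T}) : Prop :=
  (forall e, e \in M -> e.1 \in X1 /\ e.2 \in X2) /\
  (forall e f, e \in M -> f \in M -> e != f -> e.1 != f.1 /\ e.2 != f.2).

(* Main.v *)
Require Import Defs.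
From mathcomp Require Import all_boot.
From mathcomp Require Import zify.
Set Implicit Arguments. Unset Strict Implicit. Unset Printing Implicit Defensive.

Lemma uniq3 (T : eqType) (x y z : T) :
  x != y -> x != z -> y != z -> uniq [:: x; y; z].
Proof. by move=> H1 H2 H3; rewrite /= !inE !negb_or H1 H2 H3. Qed.

Lemma uniq4 (T : eqType) (x y z w : T) :
  x != y -> x != z -> x != w -> y != z -> y != w -> z != w -> uniq [:: x; y; z; w].
Proof. by move=> H1 H2 H3 H4 H5 H6; rewrite /= !inE !negb_or H1 H2 H3 H4 H5 H6. Qed.

Lemma card_le1S (T : finType) (B : {set T}) :
  (forall x y, x \in B -> y \in B -> x = y) -> #|B| <= 1.
Proof.
move=> H; case: (set_0Vmem B) => [->|[x xB]]; first by rewrite cards0.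
have : B \subset [set x] by apply/subsetP=> y yB; rewrite inE (H y x yB xB).
by move/subset_leq_card; rewrite cards1.
Qed.

Lemma sub_card (T : finType) (A B : {set T}) n :
  #|B| <= 1 -> n.+1 <= #|A| -> n <= #|A :\: B|.
Proof.
move=> HB HA; rewrite cardsD.
have := subset_leq_card (subsetIr A B); lia.
Qed.

Lemma pick1 (T : finType) (A : {set T}) : 0 < #|A| -> exists x, x \in A.
Proof. by move/card_gt0P. Qed.

Lemma pick2 (T : finType) (A : {set T}) : 1 < #|A| ->
  exists x y, [/\ x \in A, y \in A & x != y].
Proof.
move=> H; have [x xA] : exists x, x \in A by apply: pick1; lia.
have [y yA] : exists y, y \in A :\ x by apply: pick1; move: H; rewrite (cardsD1 x) xA.
move: yA; rewrite !inE => /andP[yx yA]; exists x, y; split => //; by rewrite eq_sym.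
Qed.

Lemma pick3 (T : finType) (A : {set T}) : 2 < #|A| ->
  exists x y z, [/\ x \in A, y \in A, z \in A & [/\ x != y, x != z & y != z]].
Proof.
move=> H; have [x xA] : exists x, x \in A by apply: pick1; lia.
have [y [z [yA zA yz]]] : exists y z, [/\ y \in A :\ x, z \in A :\ x & y != z].
  by apply: pick2; move: H; rewrite (cardsD1 x) xA.
move: yA zA; rewrite !inE => /andP[yx yA] /andP[zx zA]; exists x, y, z.
by split => //; split => //; rewrite eq_sym.
Qed.

Lemma L1 (T : finType) (c : nat) (F : T -> T -> 'I_c) (X : {set T}) a w x y :
  coloring_sym F -> standard F -> in_XF F X -> mono_col F X a ->
  w \notin X -> x \in X -> y \in X -> x != y -> F w x = a -> F w y = a -> False.
Proof.
move=> sym [nK31 _] [_ Hcard Hmax] HX wX xX yX xy wxa wya.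
have nin : forall z, z \in X -> w != z by move=> z zX; apply: contraNneq wX => ->.
have Hall : forall z, z \in X -> F w z = a.
  move=> z zX; case: (z =P x) => [->//|/eqP zx]; case: (z =P y) => [->//|/eqP zy].
  case: (F w z =P a) => // /eqP Hb; exfalso; apply: nK31.
  exists x, y, z, w, a, (F w z), a; split => //.
  - by apply: uniq4 => //; rewrite 1?eq_sym ?nin.
  - by apply: HX.
  - by apply: HX => //; rewrite eq_sym.
  - by apply: HX => //; rewrite eq_sym.
  - by apply: Or31.
have sub : X \subset w |: X by apply: subsetUr.
have Hm : mono F (w |: X).
  exists a => p q; rewrite !inE => /predU1P[->|pX] /predU1P[->|qX] pq.
  - by rewrite eqxx in pq.
  - exact: Hall.
  - by rewrite sym; apply: Hall.
  - exact: HX.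
have E := Hmax _ sub (leq_trans Hcard (subset_leq_card sub)) Hm.
by move: wX; rewrite -E setU11.
Qed.

Lemma L2 (T : finType) (c : nat) (F : T -> T -> 'I_c) (X : {set T}) a w x y :
  coloring_sym F -> standard F -> in_XF F X -> mono_col F X a ->
  w \notin X -> x \in X -> y \in X -> F w x != a -> F w y != a -> F w x = F w y.
Proof.
move=> sym [nK31 _] [_ Hcard Hmax] HX wX xX yX wxa wya.
apply/eqP/negP => /negP Hne.
have xy : x != y by apply: contra_neq Hne => ->.
pose f := F w.
have S : forall p q r, p \in X -> q \in X -> r \in X -> p != q -> r != p -> r != q ->
    f p != a -> f q != a -> f p != f q -> [&& f r != a, f r != f p & f r != f q].
  move=> p q r pX qX rX pq rp rq fpa fqa fpq.
  have nin : forall z, z \in X -> w != z by move=> z zX; apply: contraNneq wX => ->.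
  have u3 : uniq [:: a; f p; f q] by apply: uniq3; rewrite // eq_sym.
  case: (f r =P a) => [fra|/eqP fra].
    exfalso; apply: nK31; exists r, p, q, w, a, (f p), (f q); split => //.
    - by apply: uniq4 => //; rewrite 1?eq_sym ?nin.
    - exact: HX.
    - exact: HX.
    - exact: HX.
    - by apply: Or32.
  case: (f r =P f p) => [frp|/eqP frp].
    exfalso; apply: nK31; exists p, r, q, w, a, (f p), (f q); split => //.
    - by apply: uniq4 => //; rewrite 1?eq_sym ?nin.
    - by apply: HX; rewrite // eq_sym.
    - exact: HX.
    - exact: HX.
    - by apply: Or33.
  case: (f r =P f q) => [frq|/eqP frq]; last by apply/and3P.
  exfalso; apply: nK31; exists q, r, p, w, a, (f q), (f p); split => //.
  - by apply: uniq4 => //; rewrite 1?eq_sym ?nin.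
  - by apply: HX; rewrite // eq_sym.
  - by apply: HX; rewrite // eq_sym.
  - by apply: HX; rewrite // eq_sym.
  - by apply: Or33; split => //; apply: uniq3; rewrite // eq_sym.

have Nz : forall z, z \in X -> f z != a.
  move=> z zX; case: (z =P x) => [->//|/eqP zx]; case: (z =P y) => [->//|/eqP zy].
  by case/and3P: (S x y z xX yX zX xy zx zy wxa wya Hne).
have inj : {in X &, injective f}.
  move=> z z' zX z'X E; apply/eqP/negP => /negP zz; move: E; apply/eqP.
  case: (z =P x) => [zx|/eqP zx].
    subst z; case: (z' =P y) => [->//|/eqP z'y].
    have z'x : z' != x by rewrite eq_sym.
    by case/and3P: (S x y z' xX yX z'X xy z'x z'y wxa wya Hne) => _; rewrite eq_sym.
  have Hzx : f z != f x.
    case: (z =P y) => [->|/eqP zy]; first by rewrite eq_sym.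
    by case/and3P: (S x y z xX yX zX xy zx zy wxa wya Hne).
  case: (z' =P x) => [->//|/eqP z'x].
  have xz : x != z by rewrite eq_sym.
  have Hxz : f x != f z by rewrite eq_sym.
  have z'z : z' != z by rewrite eq_sym.
  by case/and3P: (S x z z' xX zX z'X xz z'x z'z (Nz x xX) (Nz z zX)
    Hxz) => _ _; rewrite eq_sym.
have sub : f @: X \subset [set~ a].
  by apply/subsetP => _ /imsetP[z zX ->]; rewrite !inE Nz.
have := subset_leq_card sub; rewrite card_in_imset // cardsC1 card_ord.
have := leq_trans (leq_maxl c.+1 6) Hcard; lia.
Qed.

Lemma Bcard (T : finType) (c : nat) (F : T -> T -> 'I_c) (X : {set T}) a w :
  coloring_sym F -> standard F -> in_XF F X -> mono_col F X a ->
  w \notin X -> #|[set z in X | F w z == a]| <= 1.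
Proof.
move=> sym std HX m wX; apply: card_le1S => x y; rewrite !inE.
move=> /andP[xX /eqP Hx] /andP[yX /eqP Hy]; case: (x =P y) => // /eqP xy.
by exfalso; apply: (L1 sym std HX m wX xX yX xy Hx Hy).
Qed.

Lemma bigX (T : finType) (c : nat) (F : T -> T -> 'I_c) (X : {set T}) :
  in_XF F X -> 6 <= #|X| /\ c.+1 <= #|X|.
Proof.
case=> _ H _; split; apply: leq_trans H; [exact: leq_maxr | exact: leq_maxl].
Qed.

Lemma ClaimA (T : finType) (c : nat) (F : T -> T -> 'I_c) (X1 X2 : {set T}) c1 c2 :
  coloring_sym F -> standard F -> in_XF F X1 -> in_XF F X2 ->
  mono_col F X1 c1 -> mono_col F X2 c2 -> c1 != c2 ->
  (forall u, u \in X1 -> u \notin X2) -> (forall w, w \in X2 -> w \notin X1) ->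
  forall u u' w w', u \in X1 -> u' \in X1 -> w \in X2 -> w' \in X2 ->
  F u w = c1 -> F u' w' = c1 -> u = u'.
Proof.
move=> sym std HX1 HX2 m1 m2 ne o12 o21 u u' w w' u1 u'1 w2 w'2 Hw Hw'.
case: (u =P u') => // /eqP uu; exfalso.
have [s2 _] := bigX HX2.
have [w'' ] : exists w'', w'' \in X2 :\: [set z in X2 | F u z == c2]
    :\: [set z in X2 | F u' z == c2].
  apply: pick1; apply: sub_card; first exact: (Bcard sym std HX2 m2 (o12 _ u'1)).
  apply: sub_card; first exact: (Bcard sym std HX2 m2 (o12 _ u1)).
  lia.
rewrite !inE => /andP[H1 /andP[H2 w''2]].
rewrite w''2 /= in H1 H2.
have E1 : F u w'' = c1.
  rewrite -Hw; apply: (L2 sym std HX2 m2 (o12 _ u1)) => //; by rewrite Hw.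
have E2 : F u' w'' = c1.
  rewrite -Hw'; apply: (L2 sym std HX2 m2 (o12 _ u'1)) => //; by rewrite Hw'.
apply: (L1 sym std HX1 m1 (o21 _ w''2) u1 u'1 uu); by rewrite sym.
Qed.

Lemma uniq6 (T : eqType) (a b c d e f : T) :
  a != b -> a != c -> a != d -> a != e -> a != f ->
  b != c -> b != d -> b != e -> b != f ->
  c != d -> c != e -> c != f -> d != e -> d != f -> e != f ->
  uniq [:: a; b; c; d; e; f].
Proof.
move=> *; rewrite /= !inE !negb_or; apply/and5P; split; rewrite ?andbT //;
  by repeat (apply/andP; split).
Qed.

Theorem claim5p4 (T : finType) (c : nat) (F : T -> T -> 'I_c)
  (X1 X2 : {set T}) (c1 c2 : 'I_c) :
  2 <= c -> coloring_sym F -> standard F ->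
  in_XF F X1 -> in_XF F X2 -> X1 != X2 ->
  mono_col F X1 c1 -> mono_col F X2 c2 ->
  [/\ (X1 :&: X2 = set0 ->
        c1 = c2 /\
        exists (M : {set T * T}) (c3 : 'I_c),
          [/\ matching_between X1 X2 M, c3 != c1,
              forall e, e \in M -> F e.1 e.2 = c1 &
              forall u v, u \in X1 -> v \in X2 -> (u, v) \notin M -> F u v = c3]),
      (forall v, X1 :&: X2 = [set v] ->
        c1 = c2 /\
        exists c3 : 'I_c, c3 != c1 /\
          forall u w, u \in X1 :\ v -> w \in X2 :\ v -> F u w = c3) &
      #|X1 :&: X2| < 2].
Proof.
move=> hc sym std HX1 HX2 neq m1 m2.
have [s1 _] := bigX HX1; have [s2 _] := bigX HX2.
have nX : forall (X : {set T}) x y, x \in X -> y \notin X -> x != y.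
  by move=> X x y xX yX; apply: contraNneq yX => <-.
split.
-
  move=> H0.
  have o12 : forall u, u \in X1 -> u \notin X2.
    move=> u u1; apply/negP => u2.
    by move: H0; move/setP/(_ u); rewrite !inE u1 u2.
  have o21 : forall u, u \in X2 -> u \notin X1.
    move=> u u2; apply/negP => u1.
    by move: H0; move/setP/(_ u); rewrite !inE u1 u2.
  have e : c1 = c2.
    case: (c1 =P c2) => // /eqP ne; exfalso.
    have ne' : c2 != c1 by rewrite eq_sym.
    have A1 := ClaimA sym std HX1 HX2 m1 m2 ne o12 o21.
    have A2 := ClaimA sym std HX2 HX1 m2 m1 ne' o21 o12.
    pose S1 := [set u in X1 | [exists w in X2, F u w == c1]].
    pose S2 := [set w in X2 | [exists u in X1, F w u == c2]].
    have cS1 : #|S1| <= 1.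
      apply: card_le1S => x y; rewrite !inE.
      move=> /andP[x1 /existsP[w /andP[w2 /eqP Hw]]].
      move=> /andP[y1 /existsP[w' /andP[w'2 /eqP Hw']]].
      exact: (A1 x y w w').
    have cS2 : #|S2| <= 1.
      apply: card_le1S => x y; rewrite !inE.
      move=> /andP[x1 /existsP[w /andP[w2 /eqP Hw]]].
      move=> /andP[y1 /existsP[w' /andP[w'2 /eqP Hw']]].
      exact: (A2 x y w w').
    have NS : forall u w, u \in X1 :\: S1 -> w \in X2 :\: S2 ->
        F u w != c1 /\ F u w != c2.
      move=> u w; rewrite !inE => /andP[nS u1] /andP[nS' w2].
      rewrite u1 /= in nS; rewrite w2 /= in nS'; split.
      - apply: contra nS => H; apply/existsP; exists w; by rewrite w2 H.
      - apply: contra nS' => H; apply/existsP; exists u; by rewrite u1 sym H.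
    have memA : forall u, u \in X1 :\: S1 -> u \in X1.
      by move=> u; rewrite inE => /andP[].
    have memB : forall u, u \in X2 :\: S2 -> u \in X2.
      by move=> u; rewrite inE => /andP[].
    have [p1 [p2 [p3 [P1 P2 P3 [p12 p13 p23]]]]] : exists x y z,
        [/\ x \in X1 :\: S1, y \in X1 :\: S1, z \in X1 :\: S1 &
            [/\ x != y, x != z & y != z]].
      by apply: pick3; apply: (sub_card cS1); lia.
    have [q1 [q2 [q3 [Q1 Q2 Q3 [q12 q13 q23]]]]] : exists x y z,
        [/\ x \in X2 :\: S2, y \in X2 :\: S2, z \in X2 :\: S2 &
            [/\ x != y, x != z & y != z]].
      by apply: pick3; apply: (sub_card cS2); lia.
    have K : forall u w, u \in X1 :\: S1 -> w \in X2 :\: S2 -> F u w = F p1 q1.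
      move=> u w uA wB.
      have [Hu1 Hu2] := NS u w uA wB.
      have [Hv1 Hv2] := NS u q1 uA Q1.
      have [Hz1 Hz2] := NS p1 q1 P1 Q1.
      transitivity (F u q1).
        by apply: (L2 sym std HX2 m2 (o12 _ (memA _ uA))) => //; apply: memB.
      rewrite sym [F p1 q1]sym.
      apply: (L2 sym std HX1 m1 (o21 _ (memB _ Q1))); rewrite ?memA // sym //.
    have d1 := NS p1 q1 P1 Q1.
    apply: (proj2 std).
    exists p1, p2, p3, q1, q2, q3, c1, c2, (F p1 q1); split.
    - have o : forall u w, u \in X1 :\: S1 -> w \in X2 :\: S2 -> u != w.
        move=> u w uA wB; apply: (nX X1); [exact: memA | exact: o21 (memB _ wB)].
      by apply: uniq6; rewrite // o.
    - by apply: uniq3; rewrite // eq_sym; case: d1.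
    - by split; apply: m1; rewrite ?memA.
    - by split; apply: m2; rewrite ?memB.
    - move=> x y; rewrite !inE => /or3P[]/eqP-> /or3P[]/eqP->; exact: K.
  subst c2; split => //.
  pose B u := [set z in X2 | F u z == c1].
  have cB : forall u, u \in X1 -> #|B u| <= 1.
    by move=> u u1; apply: (Bcard sym std HX2 m2 (o12 _ u1)).
  have [u0 u01] : exists u0, u0 \in X1 by apply: pick1; lia.
  have [w0] : exists w0, w0 \in X2 :\: B u0.
    by apply: pick1; apply: (sub_card (cB _ u01)); lia.
  rewrite !inE => /andP[Hw0 w02]; rewrite w02 /= in Hw0.
  exists [set e : T * T | [&& e.1 \in X1, e.2 \in X2 & F e.1 e.2 == c1]], (F u0 w0).
  split => //.
  + split.
    * by move=> e; rewrite inE => /and3P[-> ->].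
    * move=> [e1 e2] [f1 f2]; rewrite !inE /=.
      move=> /and3P[e11 e22 /eqP Fe] /and3P[f11 f22 /eqP Ff] ef; split.
      -- apply/eqP => E; subst f1.
         have ne2 : e2 != f2 by apply: contraNneq ef => ->.
         exact: (L1 sym std HX2 m2 (o12 _ e11) e22 f22 ne2 Fe Ff).
      -- apply/eqP => E; subst f2.
         have ne1 : e1 != f1 by apply: contraNneq ef => ->.
         by apply: (L1 sym std HX1 m1 (o21 _ e22) e11 f11 ne1); rewrite sym.
  + by move=> e; rewrite inE => /and3P[_ _ /eqP].
  + move=> u w u1 w2; rewrite inE /= u1 w2 /= => Huw.
    have [w''] : exists w'', w'' \in X2 :\: B u :\: B u0.
      apply: pick1; apply: (sub_card (cB _ u01)).
      by apply: (sub_card (cB _ u1)); lia.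
    rewrite !inE => /andP[H1 /andP[H2 w''2]]; rewrite w''2 /= in H1 H2.
    transitivity (F u w'').
      exact: (L2 sym std HX2 m2 (o12 _ u1)).
    transitivity (F u0 w'').
      rewrite sym [F u0 w'']sym.
      by apply: (L2 sym std HX1 m1 (o21 _ w''2)); rewrite // sym.
    exact: (L2 sym std HX2 m2 (o12 _ u01)).
-
  move=> v Hv.
  have vI : v \in X1 :&: X2 by rewrite Hv set11.
  move: (vI); rewrite inE => /andP[v1 v2].
  have o12 : forall u, u \in X1 -> u != v -> u \notin X2.
    move=> u u1 uv; apply/negP => u2; have : u \in X1 :&: X2 by rewrite inE u1 u2.
    by rewrite Hv inE (negPf uv).
  have o21 : forall u, u \in X2 -> u != v -> u \notin X1.
    move=> u u2 uv; apply/negP => u1; have : u \in X1 :&: X2 by rewrite inE u1 u2.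
    by rewrite Hv inE (negPf uv).
  have e : c1 = c2.
    case: (c1 =P c2) => // /eqP ne; exfalso.
    have [u [u' [uA u'A uu]]] : exists u u', [/\ u \in X1 :\ v, u' \in X1 :\ v & u != u'].
      by apply: pick2; move: s1; rewrite (cardsD1 v X1) v1; lia.
    move: uA u'A; rewrite !inE => /andP[uv u1] /andP[u'v u'1].
    have [w] : exists w, w \in (X2 :\ v) :\: [set z in X2 | F u z == c2]
        :\: [set z in X2 | F u' z == c2].
      apply: pick1; apply: sub_card; first exact: (Bcard sym std HX2 m2 (o12 _ u'1 u'v)).
      apply: sub_card; first exact: (Bcard sym std HX2 m2 (o12 _ u1 uv)).
      by move: s2; rewrite (cardsD1 v X2) v2; lia.
    rewrite !inE => /andP[H1 /andP[H2 /andP[wv w2]]]; rewrite w2 /= in H1 H2.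
    have Fuv : F u v = c1 by apply: m1.
    have Fu'v : F u' v = c1 by apply: m1.
    have E1 : F u w = c1.
      by rewrite -Fuv; apply: (L2 sym std HX2 m2 (o12 _ u1 uv)) => //; rewrite Fuv.
    have E2 : F u' w = c1.
      by rewrite -Fu'v; apply: (L2 sym std HX2 m2 (o12 _ u'1 u'v)) => //; rewrite Fu'v.
    by apply: (L1 sym std HX1 m1 (o21 _ w2 wv) u1 u'1 uu); rewrite sym.
  subst c2; split => //.
  have nona : forall u w, u \in X1 :\ v -> w \in X2 :\ v -> F u w != c1.
    move=> u w; rewrite !inE => /andP[uv u1] /andP[wv w2]; apply/eqP => Fuw.
    have vw : v != w by rewrite eq_sym.
    apply: (L1 sym std HX2 m2 (o12 _ u1 uv) v2 w2 vw _ Fuw).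
    by apply: m1; rewrite // eq_sym.
  have [u0 u0A] : exists u0, u0 \in X1 :\ v.
    by apply: pick1; move: s1; rewrite (cardsD1 v X1) v1; lia.
  have [w0 w0A] : exists w0, w0 \in X2 :\ v.
    by apply: pick1; move: s2; rewrite (cardsD1 v X2) v2; lia.
  exists (F u0 w0); split; first exact: nona.
  move=> u w uA wA.
  have := uA; rewrite !inE => /andP[uv u1].
  have := wA; rewrite !inE => /andP[wv w2].
  have := w0A; rewrite !inE => /andP[w0v w02].
  transitivity (F u w0).
    by apply: (L2 sym std HX2 m2 (o12 _ u1 uv)); rewrite // nona.
  rewrite sym [F u0 w0]sym.
  have := u0A; rewrite !inE => /andP[u0v u01].
  by apply: (L2 sym std HX1 m1 (o21 _ w02 w0v)); rewrite // sym nona.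
- rewrite ltnNge; apply/negP => /pick2 [u [v []]].
  rewrite !inE => /andP[u1 u2] /andP[v1 v2] uv.
  have e : c1 = c2 by rewrite -(m1 u v) // (m2 u v).
  have [w w2 w1] : exists2 w, w \in X2 & w \notin X1.
    case: (boolP (X2 \subset X1)) => sub; last by apply/subsetPn.
    have b1 : maxn c.+1 6 <= #|X1| by case: HX1.
    case: HX2 => _ _ max2.
    have E := max2 X1 sub b1 (ex_intro _ c1 m1).
    by rewrite E eqxx in neq.
  apply: (L1 sym std HX1 m1 w1 u1 v1 uv); rewrite sym e m2 //; first exact: nX w1.
  exact: nX w1.
Qed.
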